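(* For each $j$, if $\rho$ is a positive definite operator on $\mathcal H_{\mathcal S}$ then $\mathcal L_j(\rho)$ is positive definite. As a consequence, if for some $1\le j\le M$ the map $\mathcal L_{j,\zeta_j}$ is positivity improving, then so is $\mathcal L_{cy,\boldsymbol\zeta}$.
   Context: Finite-dimensional $\mathcal H_{\mathcal S},\mathcal H_{\mathcal E_j}$ ($j=1..M$), self-adjoint $H_{\mathcal S},H_{\mathcal E_j}$, self-adjoint $V_j$, $\tau_j>0$, $U_j=e^{-i\tau_j(H_{\mathcal S}\otimes\mathrm{Id}+\mathrm{Id}\otimes H_{\mathcal E_j}+V_j)}$; $\beta_{\rm ref}>0$, $\boldsymbol\zeta\in\mathbb R^M$, $\rho_{\mathcal E_j}$ the Gibbs state of $H_{\mathcal E_j}$ at $\beta_{\rm ref}-\zeta_j$; $\mathcal L_j=\mathcal L_{j,\zeta_j}$, $\mathcal L_j(\rho)=\mathrm{Tr}_{\mathcal H_{\mathcal E_j}}(U_j(\rho\otimes\rho_{\mathcal E_j})U_j^* )$; $\mathcal L_{cy,\boldsymbol\zeta}=\mathcal L_M\circ\cdots\circ\mathcal L_1$. Positivity improving: every nonzero positive operator is mapped to a positive definite operator. *)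

(* Defs.v *)
From HB Require Import structures.
From mathcomp Require Import all_boot all_algebra.
From mathcomp Require Import classical_sets reals topology normedtype sequences.
From mathcomp Require Export complex mxtens.
Set Implicit Arguments. Unset Strict Implicit. Unset Printing Implicit Defensive.
Import GRing.Theory Num.Theory numFieldNormedType.Exports.
Local Open Scope ring_scope.

Section QDefs.
Variable R : realType.
Local Notation C := (R[i]).

Definition adjmx m n (A : 'M[C]_(m, n)) : 'M[C]_(n, m) := map_mx (@conjc R) A^T.

Definition is_hermitian n (A : 'M[C]_n) : Prop := adjmx A = A.

Definition is_positive n (A : 'M[C]_n) : Prop :=
  is_hermitian A /\ forall x : 'cV[C]_n, 0 <= (adjmx x *m A *m x) 0 0.

Definition is_posdef n (A : 'M[C]_n) : Prop :=
  is_hermitian A /\ forall x : 'cV[C]_n, x != 0 -> 0 < (adjmx x *m A *m x) 0 0.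

Definition mexp_partial n (A : 'M[C]_n) (N : nat) : 'M[C]_n :=
  \sum_(k < N) ((k`!)%:R)^-1 *: A ^+ k.

Definition mexp n (A : 'M[C]_n) : 'M[C]_n :=
  \matrix_(i, j) Complex (limn (fun N => @complex.Re R (mexp_partial A N i j)))
                         (limn (fun N => @complex.Im R (mexp_partial A N i j))).

Definition gibbs n (beta : R) (H : 'M[C]_n) : 'M[C]_n :=
  (\tr (mexp (Complex (- beta) 0 *: H)))^-1 *: mexp (Complex (- beta) 0 *: H).

(* partial trace over the second tensor factor (consistent with tensmx) *)
Definition ptrace2 n m (X : 'M[C]_(n * m)) : 'M[C]_n :=
  \matrix_(i, j) \sum_(k < m) X (mxtens_index (i, k)) (mxtens_index (j, k)).

Definition coupling_unitary n m (HS : 'M[C]_n) (HE : 'M[C]_m) (V : 'M[C]_(n * m))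
  (tau : R) : 'M[C]_(n * m) :=
  mexp (Complex 0 (- tau) *: (HS *t (1%:M : 'M[C]_m) + (1%:M : 'M[C]_n) *t HE + V)).

Definition rep_channel n m (HS : 'M[C]_n) (HE : 'M[C]_m) (V : 'M[C]_(n * m))
  (tau beta : R) (rho : 'M[C]_n) : 'M[C]_n :=
  let U := coupling_unitary HS HE V tau in
  ptrace2 (U *m (rho *t gibbs beta HE) *m adjmx U).

Definition Lj n M (dE : 'I_M -> nat) (HS : 'M[C]_n)
  (HE : forall j : 'I_M, 'M[C]_(dE j)) (V : forall j : 'I_M, 'M[C]_(n * dE j))
  (tau : 'I_M -> R) (beta_ref : R) (zeta : 'I_M -> R) (j : 'I_M) : 'M[C]_n -> 'M[C]_n :=
  rep_channel HS (HE j) (V j) (tau j) (beta_ref - zeta j).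

(* L_cy = L_M o ... o L_1 (L_1 applied first) *)
Definition Lcy n M (L : 'I_M -> 'M[C]_n -> 'M[C]_n) (rho : 'M[C]_n) : 'M[C]_n :=
  foldl (fun r j => L j r) rho (enum 'I_M).

Definition positivity_improving n (f : 'M[C]_n -> 'M[C]_n) : Prop :=
  forall rho, is_positive rho -> rho != 0 -> is_posdef (f rho).

End QDefs.

Arguments Lj {R n M} dE HS HE V tau beta_ref zeta j rho.

(* Main.v *)
Require Import Defs.
From HB Require Import structures.
From mathcomp Require Import all_boot all_order all_algebra.
From mathcomp Require Import classical_sets boolp reals topology normedtype sequences exp.
From mathcomp Require Import complex mxtens.
From mathcomp Require Import zify ring lra.
Set Implicit Arguments. Unset Strict Implicit. Unset Printing Implicit Defensive.
Import Order.TTheory GRing.Theory Num.Theory numFieldNormedType.Exports.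
Local Open Scope ring_scope.
Section Ident.
Variables (K : numFieldType) (V : algType K).

Definition cf (k : nat) : K := ((k`!)%:R)^-1.
Definition Pn (a : V) (N : nat) : V := \sum_(k < N) cf k *: a ^+ k.

Lemma cf_binom (m k : nat) : (k <= m)%N ->
  cf m * ('C(m, k))%:R = cf k * cf (m - k).
Proof.
move=> km; rewrite /cf -(bin_fact km) !natrM.
have h1 : ('C(m, k))%:R != 0 :> K by rewrite pnatr_eq0 -lt0n bin_gt0.
have h2 : (k`!)%:R != 0 :> K by rewrite pnatr_eq0 -lt0n fact_gt0.
have h3 : ((m - k)`!)%:R != 0 :> K by rewrite pnatr_eq0 -lt0n fact_gt0.
by rewrite !invfM mulrAC mulVf // mul1r.
Qed.

Variables a b : V.
Hypothesis ab : a * b = b * a.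

Definition hh (k l : nat) : V := (cf k * cf l) *: (a ^+ k * b ^+ l).
Definition QQ (N : nat) : V := \sum_(k < N) \sum_(l < N | (k + l < N)%N) hh k l.

Lemma PnM N : Pn a N * Pn b N = \sum_(k < N) \sum_(l < N) hh k l.
Proof.
rewrite /Pn mulr_suml; apply: eq_bigr => k _; rewrite mulr_sumr.
by apply: eq_bigr => l _; rewrite /hh -scalerAl -scalerAr scalerA.
Qed.

Lemma QQwiden M N : (N <= M)%N ->
  QQ N = \sum_(k < M) \sum_(l < M | (k + l < N)%N) hh k l.
Proof.
move=> NM; rewrite /QQ (@big_ord_widen _ _ _ N M (fun k => \sum_(l < N | (k + l < N)%N) hh k l) NM) big_mkcond /=.
apply: eq_bigr => k _; case: ifP => kN.
  rewrite (@big_ord_widen_cond _ _ _ N M (fun l => (k + l < N)%N) (fun l => hh k l) NM); apply: eq_bigl => l /=.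
  by case: (ltnP (k + l) N) => //= h; apply/esym; lia.
rewrite big_pred0 // => l; apply/negbTE; lia.
Qed.

Lemma QQS N : QQ N.+1 = QQ N + \sum_(k < N.+1) hh k (N - k).
Proof.
rewrite (QQwiden (leqnSn N)) (QQwiden (leqnn N.+1)).
transitivity (\sum_(k < N.+1) \sum_(l < N.+1 | (k + l < N)%N) hh k l
   + \sum_(k < N.+1) \sum_(l < N.+1 | (k + l == N)%N) hh k l).
  rewrite -big_split; apply: eq_bigr => k _.
  rewrite (bigID (fun l : 'I_N.+1 => (k + l < N)%N)) /=.
  congr (_ + _); apply: eq_bigl => l; lia.
congr (_ + _); apply: eq_bigr => k _.
have kN : (N - k < N.+1)%N by lia.
rewrite (big_pred1 (Ordinal kN)) //= => l; rewrite /= -val_eqE /=.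
have := ltn_ord k; lia.
Qed.

Lemma PnD N : Pn (a + b) N = QQ N.
Proof.
elim: N => [|N IH]; first by rewrite /Pn /QQ !big_ord0.
rewrite /Pn big_ord_recr /= -/(Pn _ _) IH QQS; congr (_ + _).
rewrite addrC exprDn_comm; last by rewrite /GRing.comm ab.
rewrite scaler_sumr; apply: eq_bigr => i _.
rewrite -scaler_nat scalerA /hh cf_binom; last by have := ltn_ord i; lia.
congr (_ *: _); apply: commrX; apply: commr_sym; apply: commrX.
by rewrite /GRing.comm ab.
Qed.

Lemma PnMD N : Pn a N * Pn b N - Pn (a + b) N =
  \sum_(k < N) \sum_(l < N | ~~ (k + l < N)%N) hh k l.
Proof.
rewrite PnM PnD /QQ -sumrB; apply: eq_bigr => k _.
by rewrite (bigID (fun l : 'I_N => (k + l < N)%N)) /= addrAC subrr add0r.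
Qed.
End Ident.
Section Bounds.
Variable R : realType.
Local Notation C := R[i].
Local Notation Re := (@complex.Re R).
Local Notation Im := (@complex.Im R).
Local Open Scope complex_scope.

Definition cabs (z : C) : R := `|Re z| + `|Im z|.

Lemma cabs_ge0 z : 0 <= cabs z.
Proof. by rewrite /cabs addr_ge0. Qed.

Lemma cabs0 : cabs 0 = 0.
Proof. by rewrite /cabs /= normr0 addr0. Qed.

Lemma cabsD z w : cabs (z + w) <= cabs z + cabs w.
Proof.
case: z => a b; case: w => c d; rewrite /cabs /=.
have h1 := ler_normD a c; have h2 := ler_normD b d; lra.
Qed.

Lemma cabsM z w : cabs (z * w) <= cabs z * cabs w.
Proof.
case: z => a b; case: w => c d; rewrite /cabs /=.
have h1 := ler_normD (a * c) (- (b * d)); have h2 := ler_normD (a * d) (b * c).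
rewrite normrN !normrM in h1 h2.
have := normr_ge0 a; have := normr_ge0 b; have := normr_ge0 c; have := normr_ge0 d.
nra.
Qed.

Lemma cabs_rscale (r : R) z : cabs (r%:C * z) = `|r| * cabs z.
Proof.
case: z => a b; rewrite /cabs /= !mul0r subr0 addr0 !normrM; lra.
Qed.

Lemma cabs_conj z : cabs (conjc z) = cabs z.
Proof. by case: z => a b; rewrite /cabs /= normrN. Qed.

Lemma Re_le_cabs z : `|Re z| <= cabs z.
Proof. by rewrite /cabs lerDl. Qed.
Lemma Im_le_cabs z : `|Im z| <= cabs z.
Proof. by rewrite /cabs lerDr. Qed.

Lemma cabs_sum (I : Type) (s : seq I) (P : pred I) (F : I -> C) :
  cabs (\sum_(i <- s | P i) F i) <= \sum_(i <- s | P i) cabs (F i).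
Proof.
apply: (big_ind2 (fun x y => cabs x <= y)); first by rewrite cabs0.
  by move=> x1 x2 y1 y2 h1 h2; apply: le_trans (cabsD _ _) _; apply: lerD.
by [].
Qed.

Definition cn n (X : 'M[C]_n) (r : R) := forall j, \sum_i cabs (X i j) <= r.

Lemma cn_entry n (X : 'M[C]_n) r i j : cn X r -> cabs (X i j) <= r.
Proof.
move=> /(_ j); apply: le_trans; rewrite (bigD1 i) //= lerDl.
by apply: sumr_ge0 => k _; apply: cabs_ge0.
Qed.

Lemma cn0 n : cn (0 : 'M[C]_n) 0.
Proof. by move=> j; rewrite big1 // => i _; rewrite mxE cabs0. Qed.

Lemma cn_add n (X Y : 'M[C]_n) r s : cn X r -> cn Y s -> cn (X + Y) (r + s).
Proof.
move=> hX hY j; apply: le_trans (lerD (hX j) (hY j)).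
rewrite -big_split /=; apply: ler_sum => i _; rewrite mxE; exact: cabsD.
Qed.

Lemma cn_sum n (I : Type) (s : seq I) (P : pred I) (F : I -> 'M[C]_n) (G : I -> R) :
  (forall i, P i -> cn (F i) (G i)) ->
  cn (\sum_(i <- s | P i) F i) (\sum_(i <- s | P i) G i).
Proof.
move=> h; apply: (big_ind2 (fun x y => cn x y)) => //.
  exact: cn0.
by move=> x1 x2 y1 y2; apply: cn_add.
Qed.

Lemma cn_scale n (X : 'M[C]_n) (x r : R) : cn X r -> cn (x%:C *: X) (`|x| * r).
Proof.
move=> h j; under eq_bigr do rewrite mxE cabs_rscale.
by rewrite -mulr_sumr ler_wpM2l.
Qed.

Lemma cn_mul n (X Y : 'M[C]_n) r s : 0 <= r -> cn X r -> cn Y s -> cn (X *m Y) (r * s).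
Proof.
move=> r0 hX hY j.
apply: le_trans (_ : \sum_i \sum_k cabs (X i k) * cabs (Y k j) <= _).
  apply: ler_sum => i _; rewrite mxE; apply: le_trans (cabs_sum _ _ _) _.
  by apply: ler_sum => k _; apply: cabsM.
rewrite exchange_big /=.
apply: le_trans (_ : \sum_k r * cabs (Y k j) <= _).
  apply: ler_sum => k _; rewrite -mulr_suml; apply: ler_wpM2r; first exact: cabs_ge0.
  exact: hX.
by rewrite -mulr_sumr; apply: ler_wpM2l.
Qed.

Lemma cn1 n : cn (1%:M : 'M[C]_n) 1.
Proof.
move=> j; rewrite (bigD1 j) //= big1 ?addr0.
  by rewrite mxE eqxx /cabs /= normr1 normr0 addr0.
by move=> i /negbTE ij; rewrite mxE ij /= cabs0.
Qed.

Lemma cn_exp n (A : 'M[C]_n) c k : 0 <= c -> cn A c -> cn (A ^+ k) (c ^+ k).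
Proof.
move=> c0 hA; elim: k => [|k IH]; first by rewrite !expr0; exact: cn1.
rewrite exprSr [c ^+ _]exprSr; apply: cn_mul => //; exact: exprn_ge0.
Qed.

Lemma cn_ex n (A : 'M[C]_n) : exists c, 0 <= c /\ cn A c.
Proof.
exists (\sum_j \sum_i cabs (A i j)); split.
  by apply: sumr_ge0 => j _; apply: sumr_ge0 => i _; apply: cabs_ge0.
move=> j; rewrite [leRHS](bigD1 j) //= lerDl.
by apply: sumr_ge0 => k _; apply: sumr_ge0 => i _; apply: cabs_ge0.
Qed.

Lemma cfC k : cf C k = (cf R k)%:C.
Proof. by rewrite /cf fmorphV rmorph_nat. Qed.

Lemma cf_ge0 k : 0 <= cf R k.
Proof. by rewrite /cf invr_ge0 ler0n. Qed.

Lemma cn_PnMD n (A B : 'M[C]_n.+1) a b N : A * B = B * A -> 0 <= a -> 0 <= b ->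
  cn A a -> cn B b ->
  cn (Pn A N * Pn B N - Pn (A + B) N) (Pn (a : R^o) N * Pn b N - Pn (a + b) N).
Proof.
move=> AB a0 b0 hA hB.
rewrite (PnMD AB) (PnMD (mulrC (a : R^o) b)).
apply: cn_sum => k _; apply: cn_sum => l _.
rewrite /hh !cfC -rmorphM.
have -> : (cf R k * cf R l) *: ((a : R^o) ^+ k * b ^+ l) = `|cf R k * cf R l| * (a ^+ k * b ^+ l).
  by rewrite ger0_norm // mulr_ge0 // cf_ge0.
apply: cn_scale; rewrite -mulmxE; apply: cn_mul; first exact: exprn_ge0.
  exact: cn_exp.
exact: cn_exp.
Qed.

End Bounds.
Section Conv.
Variable R : realType.
Local Notation C := R[i].
Local Notation Re := (@complex.Re R).
Local Notation Im := (@complex.Im R).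
Local Open Scope classical_set_scope.
Local Open Scope ring_scope.

Definition ccvg (u : nat -> C) (z : C) :=
  (fun N => Re (u N)) @ \oo --> Re z /\ (fun N => Im (u N)) @ \oo --> Im z.

Lemma ccvg_uniq u z w : ccvg u z -> ccvg u w -> z = w.
Proof.
move=> [h1 h2] [h3 h4].
case: z h1 h2 => a b /= h1 h2; case: w h3 h4 => c d /= h3 h4.
have L := @cvg_lim _ (@Rhausdorff R).
by rewrite -(L _ _ _ _ _ h1) -(L _ _ _ _ _ h2) -(L _ _ _ _ _ h3) -(L _ _ _ _ _ h4).
Qed.

Lemma rcvgD (f g : nat -> R) (a b : R) : f @ \oo --> a -> g @ \oo --> b ->
  (fun N => f N + g N) @ \oo --> a + b.
Proof. move=> h1 h2; exact: (cvgD h1 h2). Qed.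
Lemma rcvgB (f g : nat -> R) (a b : R) : f @ \oo --> a -> g @ \oo --> b ->
  (fun N => f N - g N) @ \oo --> a - b.
Proof. move=> h1 h2; exact: (cvgB h1 h2). Qed.
Lemma rcvgM (f g : nat -> R) (a b : R) : f @ \oo --> a -> g @ \oo --> b ->
  (fun N => f N * g N) @ \oo --> a * b.
Proof. move=> h1 h2; exact: (cvgM h1 h2). Qed.
Lemma rcvgN (f : nat -> R) (a : R) : f @ \oo --> a ->
  (fun N => - f N) @ \oo --> - a.
Proof. move=> h1; exact: (cvgN h1). Qed.


Lemma ReD x y : Re (x + y) = Re x + Re y. Proof. by case: x; case: y. Qed.
Lemma ImD x y : Im (x + y) = Im x + Im y. Proof. by case: x; case: y. Qed.
Lemma ReM x y : Re (x * y) = Re x * Re y - Im x * Im y. Proof. by case: x; case: y. Qed.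
Lemma ImM x y : Im (x * y) = Re x * Im y + Im x * Re y. Proof. by case: x; case: y. Qed.
Lemma ReB x y : Re (x - y) = Re x - Re y. Proof. by case: x; case: y. Qed.
Lemma ImB x y : Im (x - y) = Im x - Im y. Proof. by case: x; case: y. Qed.
Lemma ReJ x : Re (conjc x) = Re x. Proof. by case: x. Qed.
Lemma ImJ x : Im (conjc x) = - Im x. Proof. by case: x. Qed.
Lemma Re_rscale (r : R) x : Re ((r%:C)%C * x) = r * Re x.
Proof. by case: x => a b /=; rewrite mul0r subr0. Qed.
Lemma Im_rscale (r : R) x : Im ((r%:C)%C * x) = r * Im x.
Proof. by case: x => a b /=; rewrite mul0r addr0. Qed.
Lemma Re_sum (I : Type) (s : seq I) (P : pred I) (F : I -> C) :
  Re (\sum_(i <- s | P i) F i) = \sum_(i <- s | P i) Re (F i).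
Proof. by apply: (big_morph _ ReD). Qed.
Lemma Im_sum (I : Type) (s : seq I) (P : pred I) (F : I -> C) :
  Im (\sum_(i <- s | P i) F i) = \sum_(i <- s | P i) Im (F i).
Proof. by apply: (big_morph _ ImD). Qed.

Lemma ccvgD u v z w : ccvg u z -> ccvg v w -> ccvg (fun N => u N + v N) (z + w).
Proof.
move=> [h1 h2] [h3 h4]; split.
  rewrite ReD (_ : (fun N => _) = (fun N => Re (u N) + Re (v N))).
    exact: rcvgD.
  by apply: funext => N; rewrite ReD.
rewrite ImD (_ : (fun N => _) = (fun N => Im (u N) + Im (v N))).
  exact: rcvgD.
by apply: funext => N; rewrite ImD.
Qed.

Lemma ccvgM u v z w : ccvg u z -> ccvg v w -> ccvg (fun N => u N * v N) (z * w).
Proof.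
move=> [h1 h2] [h3 h4]; split.
  rewrite ReM (_ : (fun N => _) = (fun N => Re (u N) * Re (v N) - Im (u N) * Im (v N))).
    by apply: rcvgB; apply: rcvgM.
  by apply: funext => N; rewrite ReM.
rewrite ImM (_ : (fun N => _) = (fun N => Re (u N) * Im (v N) + Im (u N) * Re (v N))).
  by apply: rcvgD; apply: rcvgM.
by apply: funext => N; rewrite ImM.
Qed.

Lemma ccvgJ u z : ccvg u z -> ccvg (fun N => conjc (u N)) (conjc z).
Proof.
move=> [h1 h2]; split.
  by rewrite ReJ (_ : (fun N => _) = (fun N => Re (u N))) //; apply: funext => N; rewrite ReJ.
rewrite ImJ (_ : (fun N => _) = (fun N => - Im (u N))); first exact: rcvgN.
by apply: funext => N; rewrite ImJ.
Qed.

Lemma ccvg_cst z : ccvg (fun _ => z) z.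
Proof. by split; apply: cvg_cst. Qed.

Lemma ccvg0 : ccvg (fun _ => 0) 0.
Proof. exact: ccvg_cst. Qed.

Lemma ccvg_sum m (u : 'I_m -> nat -> C) (z : 'I_m -> C) :
  (forall i, ccvg (u i) (z i)) ->
  ccvg (fun N => \sum_(i < m) u i N) (\sum_(i < m) z i).
Proof.
elim: m u z => [|m IH] u z h.
  rewrite big_ord0 (_ : (fun N => _) = (fun _ => 0)); first exact: ccvg0.
  by apply: funext => N; rewrite big_ord0.
rewrite big_ord_recr (_ : (fun N => _) =
   (fun N => \sum_(i < m) u (widen_ord (leqnSn m) i) N + u ord_max N)).
  by apply: ccvgD => //; apply: IH.
by apply: funext => N; rewrite big_ord_recr.
Qed.

Lemma ccvg_squeeze u v z (e : nat -> R) : ccvg v z ->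
  (forall N, cabs (u N - v N) <= e N) -> e @ \oo --> 0 -> ccvg u z.
Proof.
move=> [h1 h2] he e0.
have eN : (fun N => - e N) @ \oo --> 0 by rewrite -oppr0; apply: rcvgN.
have r0 : (fun N => Re (u N - v N)) @ \oo --> 0.
  apply: (squeeze_cvgr _ eN e0); apply: nearW => N.
  by rewrite -ler_norml; apply: le_trans (Re_le_cabs _) (he N).
have i0 : (fun N => Im (u N - v N)) @ \oo --> 0.
  apply: (squeeze_cvgr _ eN e0); apply: nearW => N.
  by rewrite -ler_norml; apply: le_trans (Im_le_cabs _) (he N).
split.
  rewrite -[Re z]addr0 (_ : (fun N => _) = (fun N => Re (v N) + Re (u N - v N))).
    exact: rcvgD.
  by apply: funext => N; rewrite ReB addrC subrK.
rewrite -[Im z]addr0 (_ : (fun N => _) = (fun N => Im (v N) + Im (u N - v N))).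
  exact: rcvgD.
by apply: funext => N; rewrite ImB addrC subrK.
Qed.

Lemma rser_cvg (u : nat -> R) c : 0 <= c ->
  (forall k, `|u k| <= cf R k * c ^+ k) -> cvgn (series u).
Proof.
move=> c0 hu; apply: (@normed_cvg R R^o).
apply: (series_le_cvg _ _ _ (is_cvg_series_exp_coeff c)).
- by move=> k; apply: normr_ge0.
- by move=> k; apply: exp_coeff_ge0.
- by move=> k; rewrite /exp_coeff /= mulrC; apply: hu.
Qed.

End Conv.
Section Mexp.
Variable R : realType.
Local Notation C := R[i].
Local Notation Re := (@complex.Re R).
Local Notation Im := (@complex.Im R).
Local Open Scope classical_set_scope.
Local Open Scope ring_scope.

Lemma cfCr k : ((k`!)%:R)^-1 = ((cf R k)%:C)%C :> C.
Proof. by rewrite -cfC. Qed.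

Lemma ccvg_mexp n (A : 'M[C]_n) i j :
  ccvg (fun N => mexp_partial A N i j) (mexp A i j).
Proof.
have [c [c0 hc]] := cn_ex A.
have eRe : (fun N => Re (mexp_partial A N i j)) =
    series (fun k => cf R k * Re ((A ^+ k) i j)).
  apply: funext => N; rewrite seriesEord /= /mexp_partial summxE Re_sum.
  by apply: eq_bigr => k _; rewrite mxE cfCr Re_rscale.
have eIm : (fun N => Im (mexp_partial A N i j)) =
    series (fun k => cf R k * Im ((A ^+ k) i j)).
  apply: funext => N; rewrite seriesEord /= /mexp_partial summxE Im_sum.
  by apply: eq_bigr => k _; rewrite mxE cfCr Im_rscale.
have hk k : cabs ((A ^+ k) i j) <= c ^+ k by apply: cn_entry; apply: cn_exp.
split; rewrite mxE /=.
  rewrite eRe; apply: (rser_cvg c0) => k.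
  rewrite normrM ger0_norm ?cf_ge0 // ler_wpM2l ?cf_ge0 //.
  exact: le_trans (Re_le_cabs _) (hk k).
rewrite eIm; apply: (rser_cvg c0) => k.
rewrite normrM ger0_norm ?cf_ge0 // ler_wpM2l ?cf_ge0 //.
exact: le_trans (Im_le_cabs _) (hk k).
Qed.

Lemma Pn_exp (x : R) : (fun N => Pn (x : R^o) N) @ \oo --> expR x.
Proof.
have -> : (fun N => Pn (x : R^o) N) = series (exp_coeff x).
  apply: funext => N; rewrite seriesEord /= /Pn.
  by apply: eq_bigr => k _; rewrite /exp_coeff /= mulrC.
exact: is_cvg_series_exp_coeff.
Qed.

Lemma cabsN (z : C) : cabs (- z) = cabs z.
Proof. by case: z => a b; rewrite /cabs /= !normrN. Qed.

Lemma mexp_add n (A B : 'M[C]_n) : A *m B = B *m A ->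
  mexp A *m mexp B = mexp (A + B).
Proof.
case: n A B => [|n] A B AB; first by apply/matrixP => -[].
apply/matrixP => i j.
have [a [a0 ha]] := cn_ex A; have [b [b0 hb]] := cn_ex B.
have h1 : ccvg (fun N => (mexp_partial A N *m mexp_partial B N) i j)
               ((mexp A *m mexp B) i j).
  rewrite mxE (_ : (fun N => _) =
     fun N => \sum_k mexp_partial A N i k * mexp_partial B N k j).
    by apply: ccvg_sum => k; apply: ccvgM; apply: ccvg_mexp.
  by apply: funext => N; rewrite mxE.
have AB' : A * B = B * A by rewrite -mulmxE.
have h2 : ccvg (fun N => mexp_partial (A + B) N i j) ((mexp A *m mexp B) i j).
  apply: (ccvg_squeeze (e := fun N => Pn (a : R^o) N * Pn b N - Pn (a + b) N) h1).
    move=> N; rewrite -cabsN opprB.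
    have := cn_entry i j (cn_PnMD N AB' a0 b0 ha hb).
    by move=> h; apply: le_trans h; rewrite !mxE; exact: lexx.
  suff H : (fun N => Pn (a : R^o) N * Pn b N - Pn (a + b) N) @ \oo -->
           expR a * expR b - expR (a + b) by rewrite expRD subrr in H.
  by apply: rcvgB; [apply: rcvgM|]; apply: Pn_exp.
exact: ccvg_uniq h2 (ccvg_mexp _ _ _).
Qed.

Lemma mexp_partial0 n N : mexp_partial (0 : 'M[C]_n) N.+1 = 1%:M.
Proof.
rewrite /mexp_partial big_ord_recl big1 ?addr0.
  by rewrite expr0 fact0 invr1 scale1r.
by move=> k _; rewrite expr0n /= scaler0.
Qed.

Lemma mexp0 n : mexp (0 : 'M[C]_n) = 1%:M.
Proof.
apply/matrixP => i j.
apply: ccvg_uniq (ccvg_mexp _ _ _) _.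
split; apply: cvg_near_cst; exists 1%N => // N /= N1;
  by rewrite -(prednK N1) mexp_partial0.
Qed.

Lemma adjmxM p q r (A : 'M[C]_(p, q)) (B : 'M[C]_(q, r)) :
  adjmx (A *m B) = adjmx B *m adjmx A.
Proof. by rewrite /adjmx trmx_mul map_mxM. Qed.

Lemma adjmx1 n : adjmx (1%:M : 'M[C]_n) = 1%:M.
Proof. by rewrite /adjmx trmx1 map_mx1. Qed.

Lemma adjmxX n (A : 'M[C]_n) k : adjmx (A ^+ k) = (adjmx A) ^+ k.
Proof.
elim: k => [|k IH]; first by rewrite !expr0 adjmx1.
by rewrite exprS exprSr -!mulmxE adjmxM IH.
Qed.

Lemma adjmxE p q (A : 'M[C]_(p, q)) i j : adjmx A i j = conjc (A j i).
Proof. by rewrite /adjmx !mxE. Qed.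

Lemma adjmx_partial n (A : 'M[C]_n) N :
  adjmx (mexp_partial A N) = mexp_partial (adjmx A) N.
Proof.
apply/matrixP => i j; rewrite adjmxE /mexp_partial !summxE rmorph_sum.
apply: eq_bigr => k _; rewrite !mxE rmorphM -adjmxX adjmxE.
by rewrite cfCr; congr (_ * _); exact: conjc_real.
Qed.

Lemma mexp_adj n (A : 'M[C]_n) : adjmx (mexp A) = mexp (adjmx A).
Proof.
apply/matrixP => i j; rewrite adjmxE.
apply: ccvg_uniq (ccvgJ (ccvg_mexp A j i)) _.
rewrite (_ : (fun N => _) = fun N => mexp_partial (adjmx A) N i j).
  exact: ccvg_mexp.
by apply: funext => N; rewrite -adjmx_partial adjmxE.
Qed.

Lemma mexp_unit n (K : 'M[C]_n) : mexp K \in unitmx.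
Proof.
have h : mexp K *m mexp (- K) = 1%:M.
  have e : K *m (- K) = (- K) *m K by rewrite mulmxN mulNmx.
  by rewrite (mexp_add e) subrr mexp0.
have [h1 _] := mulmx1_unit h; exact: h1.
Qed.

End Mexp.
Section Pos.
Variable R : realType.
Local Notation C := R[i].
Local Open Scope ring_scope.

Definition qf n (A : 'M[C]_n) (x : 'cV[C]_n) : C := (adjmx x *m A *m x) 0 0.
Definition sf n (A : 'M[C]_n) (x y : 'cV[C]_n) : C := (adjmx x *m A *m y) 0 0.

Lemma adjmxK p q (A : 'M[C]_(p, q)) : adjmx (adjmx A) = A.
Proof. by apply/matrixP => i j; rewrite !adjmxE conjcK. Qed.

Lemma adjmxD p q (A B : 'M[C]_(p, q)) : adjmx (A + B) = adjmx A + adjmx B.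
Proof. by apply/matrixP => i j; rewrite [LHS]adjmxE [RHS]mxE !adjmxE mxE rmorphD. Qed.

Lemma adjmxZ p q (c : C) (A : 'M[C]_(p, q)) : adjmx (c *: A) = conjc c *: adjmx A.
Proof. by apply/matrixP => i j; rewrite [LHS]adjmxE [RHS]mxE !adjmxE mxE rmorphM. Qed.

Lemma qfE n (A : 'M[C]_n) x :
  qf A x = \sum_i \sum_j conjc (x i 0) * A i j * x j 0.
Proof.
rewrite /qf mxE exchange_big /=; apply: eq_bigr => j _.
rewrite mxE mulr_suml; apply: eq_bigr => i _; by rewrite adjmxE.
Qed.

Lemma herm_entry n (A : 'M[C]_n) i j : is_hermitian A -> A i j = conjc (A j i).
Proof. by move=> h; rewrite -{1}h adjmxE. Qed.

Lemma herm_cong n (W P : 'M[C]_n) : is_hermitian P -> is_hermitian (adjmx W *m P *m W).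
Proof. by move=> h; rewrite /is_hermitian !adjmxM adjmxK h mulmxA. Qed.

Lemma qf_cong n (W P : 'M[C]_n) x : qf (adjmx W *m P *m W) x = qf P (W *m x).
Proof. by rewrite /qf adjmxM !mulmxA. Qed.

Lemma pos_cong n (W P : 'M[C]_n) : is_positive P -> is_positive (adjmx W *m P *m W).
Proof.
case=> h1 h2; split; first exact: herm_cong.
by move=> x; rewrite -/(qf _ _) qf_cong; apply: h2.
Qed.

Lemma posdef_cong n (W P : 'M[C]_n) : W \in unitmx -> is_posdef P ->
  is_posdef (adjmx W *m P *m W).
Proof.
move=> uW [h1 h2]; split; first exact: herm_cong.
move=> x x0; rewrite -/(qf _ _) qf_cong; apply: h2.
apply: contra x0 => /eqP e; apply/eqP.
by rewrite -(mulKmx uW x) e mulmx0.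
Qed.

Lemma adjmx_unit n (W : 'M[C]_n) : W \in unitmx -> adjmx W \in unitmx.
Proof. by move=> uW; rewrite /adjmx map_unitmx unitmx_tr. Qed.

Lemma nz_cong n (W P : 'M[C]_n) : W \in unitmx -> P != 0 ->
  adjmx W *m P *m W != 0.
Proof.
move=> uW; apply: contra => /eqP e; apply/eqP.
have uW' := adjmx_unit uW.
rewrite -(mulKmx uW' P) -(mulmxK uW (adjmx W *m P)) e.
by rewrite mul0mx mulmx0.
Qed.

Lemma pos_real (c : C) : 0 < c -> conjc c = c.
Proof.
move=> c0; have := ger0_Im (ltW c0); case: c c0 => a b /= _ ->.
by rewrite oppr0.
Qed.

Lemma herm_scale n (c : C) (P : 'M[C]_n) : 0 < c -> is_hermitian P ->
  is_hermitian (c *: P).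
Proof. by move=> c0 h; rewrite /is_hermitian adjmxZ pos_real // h. Qed.

Lemma qf_scale n (c : C) (P : 'M[C]_n) x : qf (c *: P) x = c * qf P x.
Proof. by rewrite /qf -scalemxAr -scalemxAl mxE. Qed.

Lemma pos_scale n (c : C) (P : 'M[C]_n) : 0 < c -> is_positive P ->
  is_positive (c *: P).
Proof.
move=> c0 [h1 h2]; split; first exact: herm_scale.
by move=> x; rewrite -/(qf _ _) qf_scale; apply: mulr_ge0; [exact: ltW | exact: h2].
Qed.

Lemma posdef_scale n (c : C) (P : 'M[C]_n) : 0 < c -> is_posdef P ->
  is_posdef (c *: P).
Proof.
move=> c0 [h1 h2]; split; first exact: herm_scale.
by move=> x x0; rewrite -/(qf _ _) qf_scale; apply: mulr_gt0 => //; exact: h2.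
Qed.

Lemma nz_scale n (c : C) (P : 'M[C]_n) : 0 < c -> P != 0 -> c *: P != 0.
Proof. by move=> c0 P0; rewrite scaler_eq0 negb_or P0 andbT gt_eqF. Qed.

End Pos.
Section Tens.
Variable R : realType.
Local Notation C := R[i].
Local Open Scope ring_scope.

Lemma sum_pick m (k : 'I_m) (G : 'I_m -> C) :
  (forall l, l != k -> G l = 0) -> \sum_l G l = G k.
Proof.
move=> h; rewrite (bigD1 k) //= big1 ?addr0 // => l lk; exact: h.
Qed.

Lemma sum_tens n m (F : 'I_(n * m) -> C) :
  \sum_p F p = \sum_(i < n) \sum_(k < m) F (mxtens_index (i, k)).
Proof.
rewrite pair_big /= (reindex (@mxtens_index n m)) /=.
  by apply: eq_bigr => -[i k].
by exists (@mxtens_unindex n m) => p _; rewrite (mxtens_indexK, mxtens_unindexK).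
Qed.

Definition slice n m (k : 'I_m) (x : 'cV[C]_(n * m)) : 'cV[C]_n :=
  \col_i x (mxtens_index (i, k)) 0.

Lemma qf_tens1 n m (P : 'M[C]_n) x :
  qf (P *t (1%:M : 'M[C]_m)) x = \sum_k qf P (slice k x).
Proof.
rewrite qfE sum_tens.
under eq_bigr => i _ do under eq_bigr => k _ do rewrite sum_tens.
rewrite exchange_big /=; apply: eq_bigr => k _; rewrite qfE.
apply: eq_bigr => i _; apply: eq_bigr => j _.
rewrite (sum_pick (k:=k)) => [|l lk].
  by rewrite tensmxE !mxE eqxx mulr1.
by rewrite tensmxE !mxE eq_sym (negbTE lk) /= mulr0n !mulr0 mul0r.
Qed.

Lemma herm_tens1 n m (P : 'M[C]_n) : is_hermitian P ->
  is_hermitian (P *t (1%:M : 'M[C]_m)).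
Proof.
move=> h; rewrite /is_hermitian /adjmx trmx_tens map_mxT.
by rewrite -/(adjmx P) h trmx1 map_mx1.
Qed.

Lemma nz_entry n m (x : 'M[C]_(n, m)) : x != 0 -> exists i j, x i j != 0.
Proof.
move=> x0; case: (pickP (fun p : 'I_n * 'I_m => x p.1 p.2 != 0)) => [[i j] h|h0].
  by exists i, j.
case/eqP: x0; apply/matrixP => i j; rewrite mxE.
by move/negbFE/eqP: (h0 (i, j)).
Qed.

Lemma pos_tens1 n m (P : 'M[C]_n) : is_positive P ->
  is_positive (P *t (1%:M : 'M[C]_m)).
Proof.
case=> h1 h2; split; first exact: herm_tens1.
move=> x; rewrite -/(qf _ _) qf_tens1; apply: sumr_ge0 => k _; exact: h2.
Qed.

Lemma posdef_tens1 n m (P : 'M[C]_n) : is_posdef P ->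
  is_posdef (P *t (1%:M : 'M[C]_m)).
Proof.
case=> h1 h2; split; first exact: herm_tens1.
move=> x x0; rewrite -/(qf _ _) qf_tens1.
have [p [z hp]] := nz_entry x0; rewrite (ord1 z) in hp.
case: (mxtens_indexP p) hp => i k hp.
have sk : slice k x != 0.
  apply/eqP => /matrixP /(_ i 0); rewrite !mxE => e; move: hp; by rewrite e eqxx.
rewrite (bigD1 k) //=. apply: (lt_le_trans (h2 _ sk)). rewrite lerDl.
apply: sumr_ge0 => l _; case: (eqVneq (slice l x) 0) => [->|s0].
  by rewrite /qf mulmx0 mxE.
exact: ltW (h2 _ s0).
Qed.

End Tens.
Section PTrace.
Variable R : realType.
Local Notation C := R[i].
Local Open Scope ring_scope.

Definition liftv n m (k : 'I_m) (x : 'cV[C]_n) : 'cV[C]_(n * m) :=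
  \col_p (x (mxtens_unindex p).1 0 * (((mxtens_unindex p).2 == k)%:R)).

Lemma liftvE n m (k : 'I_m) (x : 'cV[C]_n) i l :
  liftv k x (mxtens_index (i, l)) 0 = x i 0 * ((l == k)%:R).
Proof. by rewrite /liftv mxE mxtens_indexK. Qed.

Lemma ptraceE n m (X : 'M[C]_(n * m)) i j :
  ptrace2 X i j = \sum_k X (mxtens_index (i, k)) (mxtens_index (j, k)).
Proof. by rewrite mxE. Qed.

Lemma qf_ptrace n m (X : 'M[C]_(n * m)) x :
  qf (ptrace2 X) x = \sum_k qf X (liftv k x).
Proof.
transitivity (\sum_(k < m) \sum_i \sum_j
   conjc (x i 0) * X (mxtens_index (i, k)) (mxtens_index (j, k)) * x j 0).
  rewrite qfE; symmetry; rewrite exchange_big /=; apply: eq_bigr => i _.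
  rewrite exchange_big /=; apply: eq_bigr => j _.
  by rewrite ptraceE mulr_sumr mulr_suml.
apply: eq_bigr => k _; rewrite qfE sum_tens; apply: eq_bigr => i _.
rewrite (sum_pick (k:=k)) => [|l lk]; last first.
  by apply: big1 => q _; rewrite liftvE (negbTE lk) /= mulr0 rmorph0 !mul0r.
rewrite sum_tens; apply: eq_bigr => j _.
rewrite (sum_pick (k:=k)) => [|l lk]; last first.
  by rewrite !liftvE (negbTE lk) /= !mulr0.
by rewrite !liftvE eqxx /= !mulr1.
Qed.

Lemma herm_ptrace n m (X : 'M[C]_(n * m)) : is_hermitian X -> is_hermitian (ptrace2 X).
Proof.
move=> h; apply/matrixP => i j; rewrite adjmxE !ptraceE rmorph_sum.
apply: eq_bigr => k _.
by rewrite (@herm_entry _ _ X (mxtens_index (i, k)) (mxtens_index (j, k)) h).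
Qed.

Lemma pos_ptrace n m (X : 'M[C]_(n * m)) : is_positive X -> is_positive (ptrace2 X).
Proof.
case=> h1 h2; split; first exact: herm_ptrace.
move=> x; rewrite -/(qf _ _) qf_ptrace; apply: sumr_ge0 => k _; exact: h2.
Qed.

Lemma posdef_ptrace n m (X : 'M[C]_(n * m.+1)) : is_posdef X -> is_posdef (ptrace2 X).
Proof.
case=> h1 h2; split; first exact: herm_ptrace.
move=> x x0; rewrite -/(qf _ _) qf_ptrace.
have [i [z hi]] := nz_entry x0; rewrite (ord1 z) in hi.
have l0 : liftv (ord0 : 'I_m.+1) x != 0.
  apply/eqP => /matrixP /(_ (mxtens_index (i, ord0)) 0).
  rewrite liftvE eqxx mulr1 mxE => e; move: hi; by rewrite e eqxx.
rewrite (bigD1 ord0) //=; apply: (lt_le_trans (h2 _ l0)); rewrite lerDl.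
apply: sumr_ge0 => l _; case: (eqVneq (liftv l x) 0) => [->|s0].
  by rewrite /qf mulmx0 mxE.
exact: ltW (h2 _ s0).
Qed.

Lemma qf_add n (A : 'M[C]_n) u w :
  qf A (u + w) = qf A u + sf A u w + sf A w u + qf A w.
Proof.
have add00 : forall M N : 'M[C]_1, (M + N) 0 0 = M 0 0 + N 0 0.
  by move=> M N; rewrite mxE.
rewrite /qf /sf adjmxD mulmxDl !mulmxDr !mulmxDl addrACA !add00.
by rewrite !addrA.
Qed.

Lemma sfZl n (A : 'M[C]_n) t u w : sf A (t *: u) w = conjc t * sf A u w.
Proof. by rewrite /sf adjmxZ -!scalemxAl mxE. Qed.

Lemma sfZr n (A : 'M[C]_n) t u w : sf A u (t *: w) = t * sf A u w.
Proof. by rewrite /sf -scalemxAr mxE. Qed.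

Lemma qfZ n (A : 'M[C]_n) t u : qf A (t *: u) = conjc t * t * qf A u.
Proof. by rewrite /qf adjmxZ -!scalemxAl -scalemxAr !mxE mulrA. Qed.

Lemma adj_delta n (p : 'I_n) : adjmx (delta_mx p 0 : 'cV[C]_n) = delta_mx 0 p.
Proof. by apply/matrixP => i j; rewrite adjmxE !mxE conjc_nat andbC. Qed.

Lemma sf_delta n (A : 'M[C]_n) p q : sf A (delta_mx p 0) (delta_mx q 0) = A p q.
Proof. by rewrite /sf adj_delta -rowE -colE !mxE. Qed.

Lemma qf_delta n (A : 'M[C]_n) p : qf A (delta_mx p 0) = A p p.
Proof. exact: sf_delta. Qed.

Lemma conjNJ (a : C) : conjc (- conjc a) = - a.
Proof. by case: a => x y; rewrite /= !opprK. Qed.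

Lemma pos_diag0 n (X : 'M[C]_n) : is_positive X -> (forall p, X p p = 0) -> X = 0.
Proof.
case=> h1 h2 hd; apply/matrixP => p q; rewrite mxE.
set z := X p q.
pose t := - conjc z.
have := h2 (delta_mx p 0 + t *: delta_mx q 0); rewrite -/(qf _ _).
rewrite qf_add qfZ sfZl sfZr !sf_delta !qf_delta !hd !mulr0 addr0 add0r.
rewrite (@herm_entry _ _ X q p h1) -/z /t conjNJ.
set w := z * conjc z.
have w0 : 0 <= w by apply: mulcJ_ge0.
have -> : - conjc z * z + - z * conjc z = - (w + w) by rewrite /w mulrC; ring.
rewrite oppr_ge0 => ww.
have w00 : w = 0 by apply/le_anti; rewrite w0 andbT (le_trans _ ww) // lerDl.
by move/eqP: w00; rewrite mulf_eq0 conjc_eq0 orbb => /eqP.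
Qed.

Lemma diag_ge0 n (X : 'M[C]_n) p : is_positive X -> 0 <= X p p.
Proof. by case=> _ h; rewrite -qf_delta; apply: h. Qed.

Lemma nz_ptrace n m (X : 'M[C]_(n * m)) : is_positive X -> X != 0 -> ptrace2 X != 0.
Proof.
move=> hX; apply: contra => /eqP e; apply/eqP; apply: pos_diag0 => // p.
case: (mxtens_indexP p) => i k.
have := congr1 (fun M : 'M[C]_n => M i i) e; rewrite ptraceE mxE => s0.
have := psumr_eq0P _ s0; apply => // l _; exact: diag_ge0.
Qed.

End PTrace.
Section Final.
Variable R : realType.
Local Notation C := R[i].
Local Open Scope ring_scope.

Lemma posdef1 n : is_posdef (1%:M : 'M[C]_n).
Proof.
split; first exact: adjmx1.
move=> x x0; rewrite -/(qf _ _) qfE.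
have [i [z hi]] := nz_entry x0; rewrite (ord1 z) in hi.
have term j : \sum_k conjc (x j 0) * (1%:M : 'M[C]_n) j k * x k 0 = x j 0 * conjc (x j 0).
  rewrite (sum_pick (k:=j)) => [|l lj]; last by rewrite mxE eq_sym (negbTE lj) /= mulr0n mulr0 mul0r.
  by rewrite mxE eqxx /= mulr1 mulrC.
rewrite (bigD1 i) //= term.
have hpos : 0 < x i 0 * conjc (x i 0).
  by rewrite lt_def mulf_neq0 ?conjc_eq0 // mulcJ_ge0.
apply: (lt_le_trans hpos); rewrite lerDl; apply: sumr_ge0 => j _.
by rewrite term mulcJ_ge0.
Qed.

Lemma tr_posdef m (M : 'M[C]_m.+1) : is_posdef M -> 0 < \tr M.
Proof.
case=> _ h; rewrite /mxtrace (bigD1 ord0) //=.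
have d0 i : 0 < M i i.
  rewrite -qf_delta; apply: h; apply/eqP => /matrixP /(_ i 0).
  by rewrite !mxE !eqxx /= => /eqP; rewrite oner_eq0.
apply: (lt_le_trans (d0 ord0)); rewrite lerDl; apply: sumr_ge0 => i _.
exact: ltW (d0 i).
Qed.

Lemma adjmx_tens n m p q (A : 'M[C]_(n, m)) (B : 'M[C]_(p, q)) :
  adjmx (A *t B) = adjmx A *t adjmx B.
Proof. by rewrite /adjmx trmx_tens map_mxT. Qed.

Lemma tens11 n m : (1%:M : 'M[C]_n) *t (1%:M : 'M[C]_m) = 1%:M.
Proof.
apply/matrixP => p q.
case: (mxtens_indexP p) => i k; case: (mxtens_indexP q) => j l.
rewrite tensmxE !mxE (inj_eq (can_inj (@mxtens_indexK n m))) xpair_eqE.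
by case: (i == j); case: (k == l); rewrite /= ?mulr1 ?mulr0.
Qed.

Lemma tensmxZr n m p q (A : 'M[C]_(n, m)) (c : C) (B : 'M[C]_(p, q)) :
  A *t (c *: B) = c *: (A *t B).
Proof.
apply/matrixP => r s.
case: (mxtens_indexP r) => i k; case: (mxtens_indexP s) => j l.
by rewrite tensmxE [RHS]mxE tensmxE mxE mulrCA.
Qed.

Lemma mexp_sq m (B : 'M[C]_m) : is_hermitian B ->
  exists Y, Y \in unitmx /\ mexp B = adjmx Y *m Y.
Proof.
move=> hB.
have hh : is_hermitian ((2%:R^-1 : C) *: B).
  rewrite /is_hermitian adjmxZ hB; congr (_ *: _).
  by rewrite conjc_inv conjc_nat.
exists (mexp ((2%:R^-1 : C) *: B)); split; first exact: mexp_unit.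
rewrite mexp_adj hh mexp_add; last by [].
have h2 : (2%:R^-1 + 2%:R^-1 : C) = 1 by rewrite [RHS](splitr 1) !mul1r.
by rewrite -scalerDl h2 scale1r.
Qed.

Lemma posdef_sq m (Y : 'M[C]_m) : Y \in unitmx -> is_posdef (adjmx Y *m Y).
Proof.
move=> uY; rewrite -[adjmx Y *m Y](congr1 (fun M => M *m Y) (mulmx1 (adjmx Y))).
apply: posdef_cong; first exact: uY.
exact: posdef1.
Qed.

Lemma gibbs_form m (beta : R) (H : 'M[C]_m.+1) : is_hermitian H ->
  exists c (Y : 'M[C]_m.+1), 0 < c /\ Y \in unitmx /\
    gibbs beta H = c *: (adjmx Y *m Y).
Proof.
move=> hH.
have hB : is_hermitian (Complex (- beta) 0 *: H).
  by rewrite /is_hermitian adjmxZ hH; congr (_ *: _); rewrite /= oppr0.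
have [Y [uY eB]] := mexp_sq hB.
exists (\tr (adjmx Y *m Y))^-1, Y; split.
  by rewrite invr_gt0; apply: tr_posdef; apply: posdef_sq.
split; first exact: uY.
by rewrite /gibbs eB.
Qed.

Lemma coupling_unit n m (HS : 'M[C]_n) (HE : 'M[C]_m) V tau :
  coupling_unitary HS HE V tau \in unitmx.
Proof. exact: mexp_unit. Qed.

Lemma tens1_unit n m (Y : 'M[C]_m) : Y \in unitmx ->
  (1%:M : 'M[C]_n) *t Y \in unitmx.
Proof.
move=> uY.
have e : ((1%:M : 'M[C]_n) *t Y) *m ((1%:M : 'M[C]_n) *t invmx Y) = 1%:M.
  by rewrite tensmx_mul mulmx1 (mulmxV uY) tens11.
have [h _] := mulmx1_unit e; exact: h.
Qed.

Lemma rep_aux n m (U : 'M[C]_(n * m)) (Y : 'M[C]_m) (c : C) (rho : 'M[C]_n) :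
  U *m (rho *t (c *: (adjmx Y *m Y))) *m adjmx U =
  c *: (adjmx (((1%:M : 'M[C]_n) *t Y) *m adjmx U) *m (rho *t (1%:M : 'M[C]_m))
        *m (((1%:M : 'M[C]_n) *t Y) *m adjmx U)).
Proof.
have := tensmxZr rho c (adjmx Y *m Y).
move=> ->.
have eT : rho *t (adjmx Y *m Y) =
   adjmx ((1%:M : 'M[C]_n) *t Y) *m (rho *t 1%:M) *m ((1%:M : 'M[C]_n) *t Y).
  by rewrite adjmx_tens adjmx1 !tensmx_mul mul1mx !mulmx1.
rewrite eT adjmxM adjmxK.
rewrite -scalemxAr -scalemxAl.
by rewrite !mulmxA.
Qed.

Lemma rep_form n m (HS : 'M[C]_n) (HE : 'M[C]_m.+1) V tau beta :
  is_hermitian HE -> exists c (W : 'M[C]_(n * m.+1)), 0 < c /\ W \in unitmx /\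
    forall rho, rep_channel HS HE V tau beta rho =
                ptrace2 (c *: (adjmx W *m (rho *t (1%:M : 'M[C]_m.+1)) *m W)).
Proof.
move=> hE; have [c [Y [c0 [uY eG]]]] := gibbs_form beta hE.
exists c, (((1%:M : 'M[C]_n) *t Y) *m adjmx (coupling_unitary HS HE V tau)).
split; first exact: c0.
split.
  rewrite unitmx_mul; apply/andP; split; first exact: tens1_unit.
  exact: adjmx_unit (coupling_unit _ _ _ _).
move=> rho; rewrite /rep_channel eG.
by rewrite rep_aux.
Qed.

Lemma nz_tens1 n m (P : 'M[C]_n) : P != 0 -> P *t (1%:M : 'M[C]_m.+1) != 0.
Proof.
move=> P0; have [i [j h]] := nz_entry P0.
apply/eqP => /matrixP /(_ (mxtens_index (i, ord0)) (mxtens_index (j, ord0))).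
rewrite tensmxE !mxE eqxx mulr1 => e; move: h; by rewrite e eqxx.
Qed.

Lemma chain (T : Type) (I : eqType) (L : I -> T -> T) (P1 P2 : T -> Prop) (j0 : I) (s : seq I) r :
  (forall k r, P2 r -> P2 (L k r)) ->
  (forall k r, P1 r -> P1 (L k r)) ->
  (forall r, P1 r -> P2 (L j0 r)) ->
  j0 \in s -> P1 r -> P2 (foldl (fun r k => L k r) r s).
Proof.
move=> h2 h1 h0; elim: s r => [|k s IH] r //=; rewrite in_cons => /orP [/eqP <-|ins] pr.
  have : P2 (L j0 r) by apply: h0.
  elim: s (L j0 r) {IH} => [|k' s' IH'] r' //= p2; apply: IH'; exact: h2.
apply: IH => //; exact: h1.
Qed.

End Final.

Theorem mainTheorem8 (R : realType) (n M : nat) (dE : 'I_M -> nat)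
  (HS : 'M[R[i]]_n) (HE : forall j : 'I_M, 'M[R[i]]_((dE j).+1))
  (V : forall j : 'I_M, 'M[R[i]]_(n * (dE j).+1))
  (tau : 'I_M -> R) (beta_ref : R) (zeta : 'I_M -> R) :
  is_hermitian HS ->
  (forall j, is_hermitian (HE j)) ->
  (forall j, is_hermitian (V j)) ->
  (forall j, 0 < tau j) ->
  0 < beta_ref ->
  (forall (j : 'I_M) (rho : 'M[R[i]]_n),
      is_posdef rho -> is_posdef (Lj (fun j => (dE j).+1) HS HE V tau beta_ref zeta j rho)) /\
  ((exists j : 'I_M,
      positivity_improving (Lj (fun j => (dE j).+1) HS HE V tau beta_ref zeta j)) ->
   positivity_improving (Lcy (Lj (fun j => (dE j).+1) HS HE V tau beta_ref zeta))).
Proof.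
move=> hS hE hV htau hb.
have P1 : forall (j : 'I_M) (rho : 'M[R[i]]_n), is_posdef rho ->
    is_posdef (Lj (fun j => (dE j).+1) HS HE V tau beta_ref zeta j rho).
  move=> j rho hr; rewrite /Lj.
  have [c [W [c0 [uW ->]]]] := rep_form HS (V j) (tau j) (beta_ref - zeta j) (hE j).
  apply: posdef_ptrace; apply: posdef_scale; first exact: c0.
  apply: posdef_cong; first exact: uW.
  exact: posdef_tens1.
have P2 : forall (j : 'I_M) (rho : 'M[R[i]]_n), is_positive rho -> rho != 0 ->
    is_positive (Lj (fun j => (dE j).+1) HS HE V tau beta_ref zeta j rho) /\
    Lj (fun j => (dE j).+1) HS HE V tau beta_ref zeta j rho != 0.
  move=> j rho hr r0; rewrite /Lj.
  have [c [W [c0 [uW ->]]]] := rep_form HS (V j) (tau j) (beta_ref - zeta j) (hE j).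
  have hX : is_positive (c *: (adjmx W *m (rho *t 1%:M) *m W)).
    apply: pos_scale; first exact: c0.
    apply: pos_cong; exact: pos_tens1.
  split; first exact: pos_ptrace.
  apply: nz_ptrace; first exact: hX.
  apply: nz_scale; first exact: c0.
  apply: nz_cong; first exact: uW.
  exact: nz_tens1.
split; first exact: P1.
move=> [j0 hj0] rho hr r0; rewrite /Lcy.
apply: (chain (P1 := fun r => is_positive r /\ r != 0) (j0 := j0)).
- move=> k r; exact: P1.
- move=> k r [h1 h2]; exact: P2.
- move=> r [h1 h2]; exact: hj0.
- exact: mem_enum.
- by split.
Qed.
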